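(* Let $D$ be a diagram of a link $L$, fix $a^*\in A(D)$, and for $a\in A(D)$ let $d_a=\beta_a\beta_{a^*}^{-1}\in Dis(MQ(L))$. Then: (1) the abelian group $Dis(MQ(L))$ is a $\Lambda$-module with scalar multiplication determined by $m\cdot d=d^m$ and $t^n\cdot d=\beta_{a^*}^n d\beta_{a^*}^{-n}$ for all $m,n\in\mathbb Z$, $d\in Dis(MQ(L))$; (2) at every crossing of $D$, in additive notation, $(1-t)\cdot d_{a_1}+t\cdot d_{a_2}-d_{a_3}=0$; (3) the set $\{d_a:a\in A(D)\}$ generates $Dis(MQ(L))$ as a $\Lambda$-module.
   Context: $\Lambda=\mathbb Z[t^{\pm1}]$. Let $L$ be an oriented classical link with diagram $D$; $A(D)$ is the set of arcs of $D$. At a crossing, $a_1$ denotes the overpassing arc, $a_2$ the underpassing arc on the right of $a_1$ (with respect to the orientation of $a_1$), $a_3$ the underpassing arc on the left of $a_1$. A quandle is a set $Q$ with a binary operation $\triangleright$ such that $x\triangleright x=x$, each translation $\beta_y(x)=x\triangleright y$ is a bijection, and $(x\triangleright y)\triangleright z=(x\triangleright z)\triangleright(y\triangleright z)$. It is medial if $(w\triangleright x)\triangleright(y\triangleright z)=(w\triangleright y)\triangleright(x\triangleright z)$ for all $w,x,y,z$. The displacement group $Dis(Q)$ is the subgroup of the automorphism group of $Q$ generated by all $\beta_y\beta_z^{-1}$; for medial $Q$ it is abelian. $MQ(L)$ is the medial quandle generated by $A(D)$ subject to $a_2\triangleright a_1=a_3$ at every crossing; arcs $a\in A(D)$ are regarded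 as elements of $MQ(L)$. Equivalently, with $MG(L)$ the group generated by $A(D)$ subject to (i) $c_1c_2^{-1}c_3=c_3c_2^{-1}c_1$ for conjugates $c_1,c_2,c_3$ of elements of $A(D)$ and (ii) $a_1a_2a_1^{-1}=a_3$ at every crossing, $MQ(L)$ is the set of conjugates of elements of $A(D)$ in $MG(L)$ with $x\triangleright y=yxy^{-1}$. *)

(* Defs.v *)
From HB Require Import structures.
From mathcomp Require Import all_boot all_order all_algebra fraction.
From Stdlib Require Import ClassicalEpsilon.
Set Implicit Arguments. Unset Strict Implicit. Unset Printing Implicit Defensive.
Import GRing.Theory.

(* x ▷ y is written [qop Q x y]; beta_y = fun x => qop Q x y. *)
Record quandle := Quandle {
  qcarrier :> Type;
  qop : qcarrier -> qcarrier -> qcarrier;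
  qop_idem : forall x, qop x x = x;
  qop_bij : forall y, bijective (fun x => qop x y);
  qop_rdist : forall x y z, qop (qop x y) z = qop (qop x z) (qop y z)
}.

Definition medial (Q : quandle) : Prop :=
  forall w x y z : Q, qop (qop w x) (qop y z) = qop (qop w y) (qop x z).

Definition beta (Q : quandle) (y : Q) : Q -> Q := fun x => qop x y.

Lemma beta_inv_ex (Q : quandle) (y : Q) :
  exists g : Q -> Q, cancel (beta y) g /\ cancel g (beta y).
Proof. by case: (qop_bij y) => g h1 h2; exists g. Qed.

Definition beta_inv (Q : quandle) (y : Q) : Q -> Q :=
  proj1_sig (constructive_indefinite_description _ (beta_inv_ex y)).

Definition qhom (Q Q' : quandle) (f : Q -> Q') : Prop :=
  forall x y : Q, f (qop x y) = qop (f x) (f y).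

(* Dis(Q): the subgroup of Aut(Q) generated by all beta_y beta_z^{-1}.
   Its elements (as functions Q -> Q) are the finite words in these
   generators; the set of generators is closed under inverses
   ((beta_y beta_z^{-1})^{-1} = beta_z beta_y^{-1}), so the generated
   subgroup is the closure of id under left multiplication by generators. *)
Inductive Dis (Q : quandle) : (Q -> Q) -> Prop :=
  | Dis_id : Dis id
  | Dis_mul (y z : Q) (f : Q -> Q) :
      Dis f -> Dis (beta y \o beta_inv z \o f).

(* A diagram is given by its finite set of arcs A and its list of crossings;
   a crossing is recorded as the triple (a1, a2, a3): a1 overpassing arc,
   a2 underpassing arc on the right of a1, a3 underpassing arc on the left. *)
Definition crossing (A : Type) := (A * A * A)%type.
Definition cr_over (A : Type) (c : crossing A) : A := c.1.1.
Definition cr_right (A : Type) (c : crossing A) : A := c.1.2.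
Definition cr_left (A : Type) (c : crossing A) : A := c.2.

Definition respects_crossings (A : eqType) (cr : seq (crossing A))
    (Q : quandle) (f : A -> Q) : Prop :=
  forall c, c \in cr -> qop (f (cr_right c)) (f (cr_over c)) = f (cr_left c).

(* (Q, iota) is the medial quandle MQ(L) presented by generators A and the
   crossing relations: universal property among medial quandles. *)
Definition is_MQ (A : eqType) (cr : seq (crossing A))
    (Q : quandle) (iota : A -> Q) : Prop :=
  [/\ medial Q, respects_crossings cr iota &
   forall (Q' : quandle) (f : A -> Q'), medial Q' -> respects_crossings cr f ->
     exists g : Q -> Q', [/\ qhom g, (forall a, g (iota a) = f a) &
       forall g' : Q -> Q', qhom g' -> (forall a, g' (iota a) = f a) ->
         forall x, g' x = g x]].

(* Realised inside the fraction field of Z[t] as the elements p / t^k. *)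
Local Open Scope ring_scope.
Definition fracZt := {fraction {poly int}}.
Definition tofracZt (p : {poly int}) : fracZt := @FracField.tofrac _ p.
Definition tL : fracZt := tofracZt 'X.
Definition in_Lambda (l : fracZt) : Prop :=
  exists (p : {poly int}) (k : nat), l = tofracZt p / tL ^+ k.

Definition d_arc (Q : quandle) (astar a : Q) : Q -> Q :=
  beta a \o beta_inv astar.

(* Main.v *)
Require Import Defs.
From HB Require Import structures.
From mathcomp Require Import all_boot all_order all_algebra.
From mathcomp Require boolp.
From Stdlib Require Import FunctionalExtensionality ProofIrrelevance.
Import GRing.Theory.
Local Open Scope ring_scope.

Section PolyAct.
Variable V : zmodType.
Variables T Ti : {additive V -> V}.
Hypothesis TK : cancel T Ti.
Hypothesis TiK : cancel Ti T.

Definition Tn n := iter n T.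
Definition Tin n := iter n Ti.

Lemma TnD n a b : Tn n (a + b) = Tn n a + Tn n b.
Proof. by elim: n => //= n IH; rewrite IH raddfD. Qed.
Lemma TnN n a : Tn n (- a) = - Tn n a.
Proof. by elim: n => //= n IH; rewrite IH raddfN. Qed.
Lemma Tn0 n : Tn n 0 = 0.
Proof. by elim: n => //= n IH; rewrite IH raddf0. Qed.
Lemma TnMz n a c : Tn n (a *~ c) = Tn n a *~ c.
Proof. by elim: n => //= n IH; rewrite IH raddfMz. Qed.
Lemma Tn_sum n (I : Type) (r : seq I) (F : I -> V) :
  Tn n (\sum_(i <- r) F i) = \sum_(i <- r) Tn n (F i).
Proof.
elim: r => [|x r IH]; first by rewrite !big_nil Tn0.
by rewrite !big_cons TnD IH.
Qed.
Lemma TinD n a b : Tin n (a + b) = Tin n a + Tin n b.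
Proof. by elim: n => //= n IH; rewrite IH raddfD. Qed.
Lemma TinN n a : Tin n (- a) = - Tin n a.
Proof. by elim: n => //= n IH; rewrite IH raddfN. Qed.
Lemma Tin0 n : Tin n 0 = 0.
Proof. by elim: n => //= n IH; rewrite IH raddf0. Qed.
Lemma TnS n a : Tn n.+1 a = Tn n (T a).
Proof. exact: iterSr. Qed.
Lemma TinS n a : Tin n.+1 a = Tin n (Ti a).
Proof. exact: iterSr. Qed.
Lemma TinTn n a : Tin n (Tn n a) = a.
Proof. elim: n a => // n IH a; by rewrite TinS [Tn _.+1 a]/Tn iterS TK IH. Qed.
Lemma TnTin n a : Tn n (Tin n a) = a.
Proof. elim: n a => // n IH a; by rewrite TnS [Tin _.+1 a]/Tin iterS TiK IH. Qed.
Lemma TinT n a : Tin n (T a) = T (Tin n a).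
Proof.
elim: n a => // n IH a; by rewrite !TinS TK -IH TiK.
Qed.
Lemma TinTn' n k a : Tin n (Tn k a) = Tn k (Tin n a).
Proof. elim: k a => // k IH a; by rewrite !TnS IH TinT. Qed.
Lemma TinAdd n k a : Tin (n + k) a = Tin n (Tin k a).
Proof. exact: iterD. Qed.

Definition pact (p : {poly int}) (v : V) :=
  \sum_(i < size p) Tn i v *~ p`_i.

Lemma pactE n (p : {poly int}) v : (size p <= n)%N -> pact p v = \sum_(i < n) Tn i v *~ p`_i.
Proof.
move=> hn; rewrite /pact (big_ord_widen n (fun i => Tn i v *~ p`_i)) //.
rewrite big_mkcond /=; apply: eq_bigr => i _; case: ifP => // /negbT.
by rewrite -leqNgt => h; rewrite nth_default // mulr0z.
Qed.

Lemma pact0 v : pact 0 v = 0.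
Proof. by rewrite /pact size_poly0 big_ord0. Qed.

Lemma pactD p q v : pact (p + q) v = pact p v + pact q v.
Proof.
set n := maxn (size p) (size q).
rewrite (pactE n) ?size_polyD // (pactE n p) ?leq_maxl //.
rewrite (pactE n q) ?leq_maxr // -big_split /=.
by apply: eq_bigr => i _; rewrite coefD mulrzDr.
Qed.

Lemma pactN p v : pact (- p) v = - pact p v.
Proof.
rewrite /pact size_polyN -sumrN; apply: eq_bigr => i _.
by rewrite coefN mulrNz.
Qed.

Lemma pactvD p a b : pact p (a + b) = pact p a + pact p b.
Proof. by rewrite /pact -big_split /=; apply: eq_bigr => i _; rewrite TnD mulrzDl. Qed.
Lemma pactvN p a : pact p (- a) = - pact p a.
Proof. by rewrite /pact -sumrN; apply: eq_bigr => i _; rewrite TnN mulNrz. Qed.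
Lemma pactv0 p : pact p 0 = 0.
Proof. by rewrite /pact big1 // => i _; rewrite Tn0 mul0rz. Qed.
Lemma pactvMz p a c : pact p (a *~ c) = pact p a *~ c.
Proof. by rewrite /pact mulrz_suml; apply: eq_bigr => i _; rewrite TnMz mulrzAC. Qed.

Lemma pactC c v : pact c%:P v = v *~ c.
Proof.
rewrite (pactE 1) ?size_polyC ?leq_b1 // big_ord1 coefC /=.
done.
Qed.

Lemma pactMX p v : pact (p * 'X) v = T (pact p v).
Proof.
rewrite (pactE (size p).+1); last first.
  by have [->|p0] := eqVneq p 0; [rewrite mul0r size_poly0 | rewrite size_mulX].
rewrite big_ord_recl coefMX /= mulr0z add0r /pact raddf_sum.
apply: eq_bigr => i _; rewrite coefMX /= raddfMz //.
Qed.

Lemma pactT p v : pact p (T v) = T (pact p v).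
Proof.
rewrite /pact raddf_sum; apply: eq_bigr => i _.
by rewrite -TnS /Tn iterS raddfMz.
Qed.

Lemma pactTi p v : pact p (Ti v) = Ti (pact p v).
Proof. by rewrite -{2}[v]TiK pactT TK. Qed.

Lemma pactTin p n v : pact p (Tin n v) = Tin n (pact p v).
Proof. by elim: n v => // n IH v; rewrite !TinS IH pactTi. Qed.
Lemma pactTn p n v : pact p (Tn n v) = Tn n (pact p v).
Proof. by elim: n v => // n IH v; rewrite !TnS IH pactT. Qed.

Lemma pactCM c q v : pact (c%:P * q) v = pact q v *~ c.
Proof.
rewrite mul_polyC (pactE (size q)) ?size_scale_leq // /pact mulrz_suml.
by apply: eq_bigr => i _; rewrite coefZ mulrzA mulrzAC.
Qed.

Lemma pactM p q v : pact (p * q) v = pact p (pact q v).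
Proof.
elim/poly_ind: p => [|p c IH]; first by rewrite mul0r !pact0.
by rewrite mulrDl pactD mulrAC pactMX IH pactCM pactD pactMX pactC.
Qed.

Lemma pact1 v : pact 1 v = v.
Proof. by rewrite -polyC1 pactC mulr1z. Qed.

Lemma pactXn n v : pact 'X^n v = Tn n v.
Proof.
elim: n => [|n IH]; first by rewrite expr0 pact1.
by rewrite exprSr pactMX IH /Tn iterS.
Qed.

Definition inLp (l : fracZt) := exists pk : {poly int} * nat, l = tofracZt pk.1 / tL ^+ pk.2.

Lemma inLpE l : in_Lambda l <-> inLp l.
Proof.
split; first by case=> p [k ->]; exists (p, k).
by case=> [[p k] ->]; exists p, k.
Qed.

Definition rep (l : fracZt) : {poly int} * nat :=
  match ClassicalEpsilon.excluded_middle_informative (inLp l) with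
  | left H => proj1_sig (ClassicalEpsilon.constructive_indefinite_description _ H)
  | right _ => (0, 0%N)
  end.

Lemma repP l : in_Lambda l -> l = tofracZt (rep l).1 / tL ^+ (rep l).2.
Proof.
move/inLpE => H; rewrite /rep; case: ClassicalEpsilon.excluded_middle_informative => // H'.
by case: ClassicalEpsilon.constructive_indefinite_description.
Qed.

Definition lact (l : fracZt) (v : V) := Tin (rep l).2 (pact (rep l).1 v).

Lemma tL_neq0 : tL != 0.
Proof. by rewrite /tL /tofracZt tofrac_eq0 polyX_eq0. Qed.

Lemma tLn_neq0 k : tL ^+ k != 0.
Proof. by rewrite expf_neq0 // tL_neq0. Qed.

Lemma tofracZtM : {morph tofracZt : x y / x * y}.
Proof. exact: tofracM. Qed.
Lemma tofracZtXn k : tofracZt 'X^k = tL ^+ k.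
Proof. by rewrite /tofracZt /tL tofracXn. Qed.

Lemma rep_eq p k q j : tofracZt p / tL ^+ k = tofracZt q / tL ^+ j ->
  p * 'X^j = q * 'X^k.
Proof.
move/eqP; rewrite eqr_div ?tLn_neq0 // -!tofracZtXn -!tofracZtM.
by rewrite /tofracZt tofrac_eq => /eqP.
Qed.

Lemma lactE l p k v : l = tofracZt p / tL ^+ k -> lact l v = Tin k (pact p v).
Proof.
move=> hl; have hL : in_Lambda l by exists p, k.
have := repP l hL; rewrite {1}hl => /rep_eq E.
rewrite /lact; set q := (rep l).1; set j := (rep l).2; rewrite -/j -/q in E.
rewrite -[pact p v](TinTn j) -pactTn -pactXn -pactM E pactM pactXn pactTn.
by rewrite -!TinAdd addnC TinAdd TinTn.
Qed.

Lemma tofracZtD : {morph tofracZt : x y / x + y}.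
Proof. exact: tofracD. Qed.
Lemma tofracZtN : {morph tofracZt : x / - x}.
Proof. exact: tofracN. Qed.

Lemma fadd p k q j : tofracZt p / tL ^+ k + tofracZt q / tL ^+ j =
  tofracZt (p * 'X^j + q * 'X^k) / tL ^+ (k + j).
Proof.
by rewrite addf_div ?tLn_neq0 // exprD tofracZtD !tofracZtM !tofracZtXn.
Qed.
Lemma fmul p k q j : (tofracZt p / tL ^+ k) * (tofracZt q / tL ^+ j) =
  tofracZt (p * q) / tL ^+ (k + j).
Proof. by rewrite mulf_div exprD tofracZtM. Qed.
Lemma fneg p k : - (tofracZt p / tL ^+ k) = tofracZt (- p) / tL ^+ k.
Proof. by rewrite tofracZtN mulNr. Qed.
Lemma fconst p : tofracZt p = tofracZt p / tL ^+ 0.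
Proof. by rewrite expr0 divr1. Qed.

Lemma inL_add l m : in_Lambda l -> in_Lambda m -> in_Lambda (l + m).
Proof. by case=> p [k ->] [q [j ->]]; rewrite fadd; eexists; eexists. Qed.
Lemma inL_mul l m : in_Lambda l -> in_Lambda m -> in_Lambda (l * m).
Proof. by case=> p [k ->] [q [j ->]]; rewrite fmul; eexists; eexists. Qed.
Lemma inL_neg l : in_Lambda l -> in_Lambda (- l).
Proof. by case=> p [k ->]; rewrite fneg; eexists; eexists. Qed.
Lemma inL_const p : in_Lambda (tofracZt p).
Proof. by rewrite fconst; eexists; eexists. Qed.
Lemma inL_tinv : in_Lambda (tL ^-1).
Proof. by exists 1, 1%N; rewrite expr1 /tofracZt tofrac1 div1r. Qed.

Lemma lact_add l m v : in_Lambda l -> in_Lambda m ->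
  lact (l + m) v = lact l v + lact m v.
Proof.
case=> p [k ->] [q [j ->]]; rewrite fadd !(lactE _ _ _ _ (erefl _)).
rewrite pactD !pactM !pactXn !pactTn TinD; congr (_ + _).
  by rewrite TinAdd TinTn.
by rewrite addnC TinAdd TinTn.
Qed.

Lemma lact_mul l m v : in_Lambda l -> in_Lambda m ->
  lact (l * m) v = lact l (lact m v).
Proof.
case=> p [k ->] [q [j ->]]; rewrite fmul !(lactE _ _ _ _ (erefl _)).
by rewrite pactM pactTin TinAdd.
Qed.

Lemma lact_neg l v : in_Lambda l -> lact (- l) v = - lact l v.
Proof.
case=> p [k ->]; rewrite fneg !(lactE _ _ _ _ (erefl _)).
by rewrite pactN TinN.
Qed.

Lemma lact_const p v : lact (tofracZt p) v = pact p v.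
Proof. by rewrite (lactE _ _ 0 _ (fconst p)). Qed.

Lemma lactvD l a b : lact l (a + b) = lact l a + lact l b.
Proof. by rewrite /lact pactvD TinD. Qed.
Lemma lactvN l a : lact l (- a) = - lact l a.
Proof. by rewrite /lact pactvN TinN. Qed.
Lemma lactv0 l : lact l 0 = 0.
Proof. by rewrite /lact pactv0 Tin0. Qed.
Lemma lact_sum l (I : Type) (r : seq I) (F : I -> V) :
  lact l (\sum_(i <- r) F i) = \sum_(i <- r) lact l (F i).
Proof.
elim: r => [|x r IH]; first by rewrite !big_nil lactv0.
by rewrite !big_cons lactvD IH.
Qed.

Lemma lact1 v : lact 1 v = v.
Proof. by rewrite -(rmorph1 (@FracField.tofrac _)) -/(tofracZt 1) lact_const pact1. Qed.
Lemma lact_nat n v : lact n%:R v = v *+ n.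
Proof.
rewrite -(rmorph_nat (@FracField.tofrac _)) -/(tofracZt _) lact_const.
by rewrite -polyC_natr pactC pmulrn -natz.
Qed.
Lemma lactN1 v : lact (-1) v = - v.
Proof.
rewrite -(rmorph1 (@FracField.tofrac _)) -rmorphN -/(tofracZt _) lact_const.
by rewrite -polyCN pactC mulrN1z.
Qed.
Lemma lact_tn n v : lact (tL ^+ n) v = Tn n v.
Proof. by rewrite -tofracZtXn lact_const pactXn. Qed.
Lemma lact_tmn n v : lact (tL ^- n) v = Tin n v.
Proof.
rewrite -[tL ^- n]div1r -(rmorph1 (@FracField.tofrac _)) -/(tofracZt 1).
by rewrite (lactE _ _ n _ (erefl _)) pact1.
Qed.
End PolyAct.

Set Implicit Arguments. Unset Strict Implicit.

Section QuandleFacts.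
Variable Q : quandle.

Lemma betaK (y : Q) : cancel (beta y) (beta_inv y).
Proof.
rewrite /beta_inv; case: ClassicalEpsilon.constructive_indefinite_description => g [h1 h2] /=.
exact: h1.
Qed.
Lemma beta_invK (y : Q) : cancel (beta_inv y) (beta y).
Proof.
rewrite /beta_inv; case: ClassicalEpsilon.constructive_indefinite_description => g [h1 h2] /=.
exact: h2.
Qed.

Lemma hom_beta (phi : Q -> Q) : qhom phi -> forall y x, phi (beta y x) = beta (phi y) (phi x).
Proof. by move=> H y x; rewrite /beta H. Qed.

Lemma hom_beta_inv (phi : Q -> Q) : qhom phi ->
  forall z x, phi (beta_inv z x) = beta_inv (phi z) (phi x).
Proof.
move=> H z x.
by rewrite -{2}[x](beta_invK z) (hom_beta H) betaK.
Qed.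

Lemma beta_hom (s : Q) : qhom (beta s).
Proof. by move=> x y; rewrite /beta qop_rdist. Qed.

Lemma beta_inv_hom (s : Q) : qhom (beta_inv s).
Proof.
move=> x y.
by rewrite -{1}[x](beta_invK s) -{1}[y](beta_invK s) -beta_hom betaK.
Qed.

Lemma Dis_conj (phi psi : Q -> Q) : qhom phi -> cancel psi phi ->
  forall f : Q -> Q, Dis f -> Dis (phi \o f \o psi).
Proof.
move=> H c f; elim => [|y z g _ IH].
  have -> : phi \o id \o psi = id by apply: functional_extensionality => x /=; exact: c.
  exact: Dis_id.
have -> : phi \o (beta y \o beta_inv z \o g) \o psi =
  beta (phi y) \o beta_inv (phi z) \o (phi \o g \o psi).
  apply: functional_extensionality => x /=.
  by rewrite (hom_beta H) (hom_beta_inv H).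
exact: Dis_mul.
Qed.

Lemma Dis_comp (f g : Q -> Q) : Dis f -> Dis g -> Dis (f \o g).
Proof.
move=> Hf Hg; elim: Hf => [|y z h _ IH]; first exact: Hg.
exact: (Dis_mul y z IH).
Qed.

Lemma beta_op (y z v : Q) : beta (qop y z) v = beta z (beta y (beta_inv z v)).
Proof.
by rewrite -{1}[v](beta_invK z) /beta -qop_rdist.
Qed.

Hypothesis med : medial Q.

Lemma medM (x y z w : Q) :
  beta y (beta_inv z (beta x w)) = beta x (beta_inv z (beta y w)).
Proof.
apply: (can_inj (betaK z)).
by rewrite -!beta_op /beta med.
Qed.

Lemma medM' (x y z v : Q) :
  beta_inv x (beta z (beta_inv y v)) = beta_inv y (beta z (beta_inv x v)).
Proof.
set a := beta_inv x _; set b := beta_inv y _.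
have Ha : beta y (beta_inv z (beta x a)) = v by rewrite /a beta_invK betaK beta_invK.
have Hb : beta y (beta_inv z (beta x b)) = v by rewrite medM /b beta_invK betaK beta_invK.
by apply: (can_inj (betaK x)); apply: (can_inj (beta_invK z)); apply: (can_inj (betaK y));
  rewrite Ha Hb.
Qed.

Lemma gen_comm (a b c d w : Q) :
  beta a (beta_inv b (beta c (beta_inv d w))) =
  beta c (beta_inv d (beta a (beta_inv b w))).
Proof. by rewrite medM medM'. Qed.

Lemma gen_comm_Dis (a b : Q) (f : Q -> Q) : Dis f ->
  forall w, beta a (beta_inv b (f w)) = f (beta a (beta_inv b w)).
Proof.
elim => [//|y z g _ IH] w /=.
by rewrite gen_comm IH.
Qed.

Lemma Dis_comm (f g : Q -> Q) : Dis f -> Dis g -> forall w, f (g w) = g (f w).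
Proof.
move=> Hf Hg; elim: Hf => [//|y z h _ IH] w /=.
by rewrite IH gen_comm_Dis.
Qed.

Lemma Dis_inv (f : Q -> Q) : Dis f -> exists e, [/\ Dis e, (forall w, e (f w) = w) & (forall w, f (e w) = w)].
Proof.
elim => [|y z h Hh [e [He h1 h2]]]; first by exists id; split => //; exact: Dis_id.
exists (beta z \o beta_inv y \o e); split.
- exact: Dis_mul.
- move=> w /=; by rewrite -(gen_comm_Dis _ _ He) betaK beta_invK h1.
- move=> w /=; by rewrite -(gen_comm_Dis _ _ Hh) betaK beta_invK h2.
Qed.
End QuandleFacts.

Record mq := MQd { mqQ :> quandle; mq_med : medial mqQ }.

Record G (M : mq) := mkG { gval :> M -> M; gdis : Dis gval }.
Arguments mkG [M] gval gdis.

Lemma G_ext (M : mq) (a b : G M) : (forall x, a x = b x) -> a = b.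
Proof.
case: a => f Hf; case: b => g Hg /= E.
have E' := functional_extensionality _ _ E; subst g.
by rewrite (proof_irrelevance _ Hf Hg).
Qed.

HB.instance Definition _ (M : mq) := @boolp.gen_eqMixin (G M).
HB.instance Definition _ (M : mq) := @boolp.gen_choiceMixin (G M).


Section GOps.
Variable M : mq.
Definition gadd (a b : G M) : G M := mkG _ (Dis_comp (gdis a) (gdis b)).
Definition gzero : G M := mkG _ (@Dis_id M).
Definition ginv_sig (a : G M) :=
  ClassicalEpsilon.constructive_indefinite_description _ (Dis_inv (@mq_med M) (gdis a)).
Definition gopp (a : G M) : G M :=
  let (e, H) := ginv_sig a in
  mkG e (let: And3 h _ _ := H in h).

Lemma gopp_val (a : G M) w : gopp a (a w) = w.
Proof. rewrite /gopp; case: (ginv_sig a) => e [? h1 h2] /=; exact: h1. Qed.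

Lemma gaddA : associative gadd.
Proof. by move=> a b c; apply: G_ext. Qed.
Lemma gaddC : commutative gadd.
Proof. by move=> a b; apply: G_ext => x /=; exact: (Dis_comm (@mq_med M) (gdis a) (gdis b) x). Qed.
Lemma gadd0 : left_id gzero gadd.
Proof. by move=> a; apply: G_ext. Qed.
Lemma gaddN : left_inverse gzero gopp gadd.
Proof. by move=> a; apply: G_ext => x /=; rewrite gopp_val. Qed.
End GOps.

HB.instance Definition _ (M : mq) :=
  GRing.isZmodule.Build (G M) (@gaddA M) (@gaddC M) (@gadd0 M) (@gaddN M).

Section GFacts.
Variable M : mq.
Lemma valD (a b : G M) x : (a + b : G M) x = a (b x). Proof. by []. Qed.
Lemma val0 x : (0 : G M) x = x. Proof. by []. Qed.
Lemma valN (a : G M) x : (- a) (a x) = x. Proof. exact: gopp_val. Qed.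
Lemma valMn (a : G M) n x : (a *+ n) x = iter n a x.
Proof. by elim: n x => // n IH x; rewrite mulrS valD IH. Qed.
End GFacts.


Section TDef.
Variables (M : mq) (s : M).
Definition T (a : G M) : G M :=
  mkG (beta s \o a \o beta_inv s) (Dis_conj (beta_hom s) (beta_invK s) (gdis a)).
Definition Ti (a : G M) : G M :=
  mkG (beta_inv s \o a \o beta s) (Dis_conj (beta_inv_hom s) (betaK s) (gdis a)).

Lemma morph_of_add (f : G M -> G M) : (forall a b, f (a + b) = f a + f b) -> zmod_morphism f.
Proof. by move=> H a b; apply: (addIr (f b)); rewrite -H !subrK. Qed.

Lemma T_add a b : T (a + b) = T a + T b.
Proof. by apply: G_ext => x /=; rewrite betaK. Qed.
Lemma Ti_add a b : Ti (a + b) = Ti a + Ti b.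
Proof. by apply: G_ext => x /=; rewrite beta_invK. Qed.
Lemma T_morph : zmod_morphism T. Proof. exact: morph_of_add T_add. Qed.
Lemma Ti_morph : zmod_morphism Ti. Proof. exact: morph_of_add Ti_add. Qed.
End TDef.

HB.instance Definition _ (M : mq) (s : M) := GRing.isZmodMorphism.Build (G M) (G M) (T s) (T_morph s).
HB.instance Definition _ (M : mq) (s : M) := GRing.isZmodMorphism.Build (G M) (G M) (Ti s) (Ti_morph s).

Section TFacts.
Variables (M : mq) (s : M).
Lemma TK : cancel (T s) (Ti s).
Proof. by move=> a; apply: G_ext => x /=; rewrite !betaK. Qed.
Lemma TiK : cancel (Ti s) (T s).
Proof. by move=> a; apply: G_ext => x /=; rewrite !beta_invK. Qed.

Lemma Tn_val n (a : G M) x : (Tn _ (T s) n a) (iter n (beta s) x) = iter n (beta s) (a x).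
Proof.
elim: n x => // n IH x.
by rewrite /Tn iterS -/(Tn _ _ n a) /= betaK IH.
Qed.
Lemma Tin_val n (a : G M) x : iter n (beta s) ((Tin _ (Ti s) n a) x) = a (iter n (beta s) x).
Proof.
elim: n x => // n IH x.
rewrite /Tin iterS -/(Tin _ _ n a) /=.
by rewrite -iterS iterSr beta_invK -/(Tin _ _ n a) IH -iterSr.
Qed.
End TFacts.

Lemma sig_ext (X : Type) (P : X -> Prop) (a b : {x | P x}) : sval a = sval b -> a = b.
Proof.
case: a => x Hx; case: b => y Hy /= E; subst y.
by rewrite (proof_irrelevance _ Hx Hy).
Qed.

Section Gen.
Variable Q : quandle.
Variable S : Q -> Prop.
Inductive genq : Q -> Prop :=
  | g_base x : S x -> genq x
  | g_op x y : genq x -> genq y -> genq (qop x y)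
  | g_inv x y : genq x -> genq y -> genq (beta_inv y x).

Definition subT := {x : Q | genq x}.
Definition sop (a b : subT) : subT := exist _ (qop (sval a) (sval b)) (g_op (svalP a) (svalP b)).
Definition sinv (b a : subT) : subT := exist _ (beta_inv (sval b) (sval a)) (g_inv (svalP a) (svalP b)).
Lemma sop_idem x : sop x x = x.
Proof. by apply: sig_ext; rewrite /= qop_idem. Qed.
Lemma sop_bij y : bijective (fun x => sop x y).
Proof.
exists (sinv y) => x; apply: sig_ext => /=.
  exact: (betaK (sval y) (sval x)).
exact: (beta_invK (sval y) (sval x)).
Qed.
Lemma sop_rdist x y z : sop (sop x y) z = sop (sop x z) (sop y z).
Proof. by apply: sig_ext; rewrite /= qop_rdist. Qed.
Definition subQ : quandle := Quandle sop_idem sop_bij sop_rdist.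
Lemma subQ_med : medial Q -> medial subQ.
Proof. by move=> H w x y z; apply: sig_ext => /=; rewrite H. Qed.
End Gen.

Lemma all_gen (A : eqType) (cr : seq (crossing A)) (Q : quandle) (iota : A -> Q) :
  is_MQ cr iota -> forall x, genq (fun y => exists a, y = iota a) x.
Proof.
case=> med rc univ x.
set S := fun y => exists a, y = iota a.
pose f (a : A) : subQ S := exist _ (iota a) (g_base (ex_intro _ a erefl)).
have rf : respects_crossings cr f.
  by move=> c hc; apply: sig_ext => /=; apply: rc.
have [g [hg ga _]] := univ (subQ S) f (subQ_med med) rf.
have [g0 [_ _ u0]] := univ Q iota med rc.
have e1 : x = g0 x by apply: (u0 id) => //.
have e2 : sval (g x) = g0 x.
  apply: (u0 (fun z => sval (g z))) => [y z|a]; first by rewrite hg.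
  by rewrite ga.
rewrite e1 -e2; exact: svalP.
Qed.

Section Main.
Variables (M : mq) (s : M).
Definition la (l : fracZt) (v : G M) : G M := lact (G M) (T s) (Ti s) l v.
Let TKs := TK s.
Let TiKs := TiK s.

Lemma la_add l m v : in_Lambda l -> in_Lambda m -> la (l + m) v = la l v + la m v.
Proof. exact: (lact_add _ _ _ TKs). Qed.
Lemma la_mul l m v : in_Lambda l -> in_Lambda m -> la (l * m) v = la l (la m v).
Proof. exact: (lact_mul _ _ _ TKs). Qed.
Lemma la_neg l v : in_Lambda l -> la (- l) v = - la l v.
Proof. exact: (lact_neg _ _ _ TKs). Qed.
Lemma la_vD l a b : la l (a + b) = la l a + la l b.
Proof. exact: lactvD. Qed.
Lemma la_sum l (I : Type) (r : seq I) (F : I -> G M) :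
  la l (\sum_(i <- r) F i) = \sum_(i <- r) la l (F i).
Proof. exact: lact_sum. Qed.
Lemma la1 v : la 1 v = v. Proof. exact: (lact1 _ _ _ TKs). Qed.
Lemma la_nat n v : la n%:R v = v *+ n. Proof. exact: (lact_nat _ _ _ TKs). Qed.
Lemma laN1 v : la (-1) v = - v. Proof. exact: (lactN1 _ _ _ TKs). Qed.
Lemma la_tn n v : la (tL ^+ n) v = Tn _ (T s) n v. Proof. exact: (lact_tn _ _ _ TKs). Qed.
Lemma la_tmn n v : la (tL ^- n) v = Tin _ (Ti s) n v. Proof. exact: (lact_tmn _ _ _ TKs). Qed.
Lemma la_t v : la tL v = T s v. Proof. by rewrite -[tL]expr1 la_tn. Qed.
Lemma la_tinv v : la tL^-1 v = Ti s v. Proof. by rewrite -[tL]expr1 la_tmn. Qed.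

Lemma inL1 : in_Lambda 1.
Proof. by rewrite -(rmorph1 (@FracField.tofrac _)); apply: inL_const. Qed.
Lemma inLt : in_Lambda tL.
Proof. exact: inL_const. Qed.

Definition act (l : fracZt) (d : M -> M) : M -> M :=
  match ClassicalEpsilon.excluded_middle_informative (Dis d) with
  | left H => gval (la l (mkG d H))
  | right _ => d
  end.

Lemma actE l d (H : Dis d) : act l d = gval (la l (mkG d H)).
Proof.
rewrite /act; case: ClassicalEpsilon.excluded_middle_informative => [H'|//].
by rewrite (proof_irrelevance _ H H').
Qed.

Lemma mkG_eta (a : G M) (H : Dis (gval a)) : mkG (gval a) H = a.
Proof. by apply: G_ext. Qed.

Definition Dg (y : M) : G M := mkG (beta y \o beta_inv s) (Dis_mul y s (Dis_id _)).

Lemma key (y v : M) : Dg (qop y v) + T s (Dg v) = T s (Dg y) + Dg v.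
Proof.
rewrite [RHS]addrC; apply: G_ext => x /=.
by rewrite !betaK beta_op betaK.
Qed.

Lemma act_Dis l d : Dis d -> Dis (act l d).
Proof. by move=> Hd; rewrite (actE l Hd); exact: gdis. Qed.
Lemma act_comp l (d e : M -> M) : Dis d -> Dis e -> forall x, act l (d \o e) x = (act l d \o act l e) x.
Proof.
move=> Hd He x; rewrite (actE l (Dis_comp Hd He)) (actE l Hd) (actE l He).
have -> : mkG (d \o e) (Dis_comp Hd He) = mkG d Hd + mkG e He by apply: G_ext.
by rewrite la_vD.
Qed.
Lemma act_add l m (d : M -> M) : in_Lambda l -> in_Lambda m -> Dis d ->
  forall x, act (l + m) d x = (act l d \o act m d) x.
Proof. by move=> hl hm Hd x; rewrite !(actE _ Hd) la_add. Qed.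
Lemma act_mul l m (d : M -> M) : in_Lambda l -> in_Lambda m -> Dis d ->
  forall x, act (l * m) d x = act l (act m d) x.
Proof.
move=> hl hm Hd x; rewrite (actE (l * m) Hd) (actE m Hd).
by rewrite (actE l (gdis (la m (mkG d Hd)))) mkG_eta la_mul.
Qed.
Lemma act_1 (d : M -> M) : Dis d -> forall x, act 1 d x = d x.
Proof. by move=> Hd x; rewrite (actE _ Hd) la1. Qed.
Lemma act_nat n (d : M -> M) : Dis d -> forall x, act n%:R d x = iter n d x.
Proof. by move=> Hd x; rewrite (actE _ Hd) la_nat valMn. Qed.
Lemma act_N1 (d : M -> M) : Dis d -> forall x, act (-1) d (d x) = x.
Proof. by move=> Hd x; rewrite (actE _ Hd) laN1; exact: (valN (mkG d Hd)). Qed.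
Lemma act_tn n (d : M -> M) : Dis d -> forall x,
  act (tL ^+ n) d (iter n (beta s) x) = iter n (beta s) (d x).
Proof. by move=> Hd x; rewrite (actE _ Hd) la_tn Tn_val. Qed.
Lemma act_tmn n (d : M -> M) : Dis d -> forall x,
  iter n (beta s) (act (tL ^- n) d x) = d (iter n (beta s) x).
Proof. by move=> Hd x; rewrite (actE _ Hd) la_tmn Tin_val. Qed.

Lemma act_cross (a1 a2 a3 : M) : qop a2 a1 = a3 -> forall x,
  (act (1 - tL) (d_arc s a1) \o act tL (d_arc s a2) \o act (-1) (d_arc s a3)) x = x.
Proof.
move=> hc x.
rewrite /= (actE _ (gdis (Dg a1))) (actE _ (gdis (Dg a2))) (actE _ (gdis (Dg a3))) !mkG_eta.
change ((la (1 - tL) (Dg a1) + la tL (Dg a2) + la (-1) (Dg a3)) x = x).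
suff -> : la (1 - tL) (Dg a1) + la tL (Dg a2) + la (-1) (Dg a3) = 0 by [].
have E : Dg a3 = T s (Dg a2) + Dg a1 - T s (Dg a1) by rewrite -hc -key addrK.
rewrite la_add; [|exact: inL1|exact: (inL_neg _ inLt)].
rewrite la_neg; last exact: inLt.
rewrite la1 !la_t laN1 E.
by apply/eqP; rewrite subr_eq0 addrC addrA.
Qed.

Variables (A : eqType) (iota : A -> M).

Definition Expr (g : G M) := exists sq : seq (fracZt * A),
  (forall p, p \in sq -> in_Lambda p.1) /\ g = \sum_(p <- sq) la p.1 (Dg (iota p.2)).

Lemma Expr0 : Expr 0.
Proof. by exists [::]; split => //; rewrite big_nil. Qed.
Lemma ExprD a b : Expr a -> Expr b -> Expr (a + b).
Proof.
case=> s1 [h1 ->] [s2 [h2 ->]]; exists (s1 ++ s2); split; last by rewrite big_cat.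
by move=> p; rewrite mem_cat => /orP [/h1|/h2].
Qed.
Lemma ExprL l a : in_Lambda l -> Expr a -> Expr (la l a).
Proof.
move=> hl [s1 [h1 ->]]; exists [seq (l * p.1, p.2) | p <- s1]; split.
  by move=> p /mapP [q /h1 hq ->] /=; apply: inL_mul.
rewrite big_map la_sum; apply: eq_big_seq => p hp /=.
by rewrite la_mul //; apply: h1.
Qed.
Lemma ExprN a : Expr a -> Expr (- a).
Proof. by move=> h; rewrite -laN1; apply: ExprL => //; apply: inL_neg; apply: inL1. Qed.
Lemma ExprT a : Expr a -> Expr (T s a).
Proof. by move=> h; rewrite -la_t; apply: ExprL => //; apply: inLt. Qed.
Lemma ExprTi a : Expr a -> Expr (Ti s a).
Proof. by move=> h; rewrite -la_tinv; apply: ExprL => //; apply: inL_tinv. Qed.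
Lemma Expr_base a : Expr (Dg (iota a)).
Proof.
exists [:: (1, a)]; split; last by rewrite big_cons big_nil addr0 la1.
by move=> p; rewrite inE => /eqP -> /=; apply: inL1.
Qed.

Lemma Expr_gen y0 : genq (fun y => exists a, y = iota a) y0 -> Expr (Dg y0).
Proof.
elim => [x [a ->]|u v _ Hu _ Hv|u v _ Hu _ Hv]; first exact: Expr_base.
  have -> : Dg (qop u v) = T s (Dg u) + Dg v - T s (Dg v) by rewrite -key addrK.
  by apply: ExprD; [apply: ExprD; [apply: ExprT|] | apply: ExprN; apply: ExprT].
set y := beta_inv v u.
have hu : u = qop y v by rewrite /y -/(beta v _) beta_invK.
have E : T s (Dg y) = Dg u + T s (Dg v) - Dg v by rewrite hu key addrK.
rewrite -[Dg y](TK s) E.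
by apply: ExprTi; apply: ExprD; [apply: ExprD; [|apply: ExprT] | apply: ExprN].
Qed.

Hypothesis allgen : forall x : M, genq (fun y => exists a, y = iota a) x.

Lemma Expr_Dis f : Dis f -> forall H : Dis f, Expr (mkG f H).
Proof.
elim => [|y z g Hg IH] H.
  have -> : mkG id H = 0 by apply: G_ext.
  exact: Expr0.
have -> : mkG _ H = Dg y + mkG g Hg - Dg z.
  apply: (addIr (Dg z)); rewrite subrK; apply: G_ext => x /=.
  by rewrite -(gen_comm_Dis (@mq_med M) _ _ Hg) betaK.
apply: ExprD; [apply: ExprD; [apply: Expr_gen; apply: allgen | apply: IH] |].
by apply: ExprN; apply: Expr_gen; apply: allgen.
Qed.

Lemma fold_val (sq : seq (fracZt * A)) x :
  (\sum_(p <- sq) la p.1 (Dg (iota p.2))) x =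
  foldr (fun p f => act p.1 (d_arc s (iota p.2)) \o f) id sq x.
Proof.
elim: sq x => [|p sq IH] x; first by rewrite big_nil.
rewrite big_cons valD IH /= (actE _ (Dis_mul (iota p.2) s (Dis_id _))).
by [].
Qed.
End Main.
Unset Implicit Arguments.
Theorem proposition29 (A : finType) (cr : seq (crossing A))
    (Q : quandle) (iota : A -> Q) (astar : A) :
  is_MQ cr iota ->
  exists act : fracZt -> (Q -> Q) -> (Q -> Q),
    (* (1) Dis(MQ(L)) is an abelian group and a Lambda-module *)
    ((forall d e : Q -> Q, Dis d -> Dis e -> forall x, d (e x) = e (d x)) /\
        (forall l (d : Q -> Q), in_Lambda l -> Dis d -> Dis (act l d)) /\
        (forall l (d e : Q -> Q), in_Lambda l -> Dis d -> Dis e ->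
           forall x, act l (d \o e) x = (act l d \o act l e) x) /\
        (forall l m (d : Q -> Q), in_Lambda l -> in_Lambda m -> Dis d ->
           forall x, act (l + m) d x = (act l d \o act m d) x) /\
        (forall l m (d : Q -> Q), in_Lambda l -> in_Lambda m -> Dis d ->
           forall x, act (l * m) d x = act l (act m d) x) /\
        (forall d : Q -> Q, Dis d -> forall x, act 1 d x = d x) /\
      (* with  m . d = d^m  for integers m *)
        (forall (n : nat) (d : Q -> Q), Dis d -> forall x, act n%:R d x = iter n d x) /\
        (forall d : Q -> Q, Dis d -> forall x, act (-1) d (d x) = x) /\
      (* and  t^n . d = beta_{a*}^n d beta_{a*}^{-n}  for integers n *)
        (forall (n : nat) (d : Q -> Q), Dis d -> forall x,
           act (tL ^+ n) d (iter n (beta (iota astar)) x)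
           = iter n (beta (iota astar)) (d x)) /\
        (forall (n : nat) (d : Q -> Q), Dis d -> forall x,
           iter n (beta (iota astar)) (act (tL ^- n) d x)
           = d (iter n (beta (iota astar)) x)))
    /\
    (* (2) crossing relation: (1-t) d_{a1} + t d_{a2} - d_{a3} = 0 *)
    (forall c, c \in cr -> forall x,
       (act (1 - tL) (d_arc (iota astar) (iota (cr_over c)))
        \o act tL (d_arc (iota astar) (iota (cr_right c)))
        \o act (-1) (d_arc (iota astar) (iota (cr_left c)))) x = x)
    /\
    (* (3) the d_a generate Dis(MQ(L)) as a Lambda-module *)
    (forall d : Q -> Q, Dis d -> exists s : seq (fracZt * A),
       (forall p, p \in s -> in_Lambda p.1) /\
       forall x, d x = foldr (fun p f => act p.1 (d_arc (iota astar) (iota p.2)) \o f)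
                             id s x).
Proof.
move=> hMQ.
have med : medial Q by case: hMQ.
have rc : respects_crossings cr iota by case: hMQ.
pose M := @MQd Q med.
have allg : forall x : M, genq (fun y => exists a, y = iota a) x := all_gen hMQ.
exists (@act M (iota astar)).
split; first split.
  by move=> d e Hd He x; exact: (Dis_comm med Hd He x).
split; first by move=> l d _ Hd; exact: (@act_Dis M _ l d Hd).
split; first by move=> l d e _ Hd He x; exact: (@act_comp M _ l d e Hd He x).
split; first by move=> l m d hl hm Hd x; exact: (@act_add M _ l m d hl hm Hd x).
split; first by move=> l m d hl hm Hd x; exact: (@act_mul M _ l m d hl hm Hd x).
split; first by move=> d Hd x; exact: (@act_1 M _ d Hd x).
split; first by move=> n d Hd x; exact: (@act_nat M _ n d Hd x).
split; first by move=> d Hd x; exact: (@act_N1 M _ d Hd x).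
split; first by move=> n d Hd x; exact: (@act_tn M _ n d Hd x).
by move=> n d Hd x; exact: (@act_tmn M _ n d Hd x).
split.
  by move=> c hc x; apply: (@act_cross M); exact: (rc c hc).
move=> d Hd.
have [sq [h1 h2]] := @Expr_Dis M (iota astar) A iota allg d Hd Hd.
exists sq; split => // x.
transitivity ((@mkG M d Hd : G M) x) => //.
rewrite h2; exact: (@fold_val M (iota astar) A iota sq x).
Qed.
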